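(* Let $n\ge r\ge1$, let $\mathcal{O}\subset\mathbb{R}^{n\times r}$ be open with ${\rm St}(n,r)\subset\mathcal{O}$, let $f:\mathcal{O}\to\mathbb{R}$ be continuously differentiable, and consider (P): $\min_{X\in\mathcal{S}_{+}^{n,r}}f(X)$. Fix $\gamma>0$. Suppose that every global (respectively, local) minimizer of (P) has no zero rows when $n>r>1$, and that for every global (respectively, local) minimizer $X^*$ of (P) there exist $\delta'>0$ and $L'>0$ such that for all $X\in{\rm St}(n,r)$ with $\|X-X^*\|_F\le\delta'$ and all $\overline{X}\in{\rm Proj}_{\mathcal{S}_{+}^{n,r}}(X)$, \[ f(X)-f(\overline{X})\ge -L'\|X-\overline{X}\|_F^2. \] Then for every global (respectively, local) minimizer $X^*$ of (P): 1. if $n=r$ or $n>r=1$, with $\kappa'>0$ a constant such that ${\rm dist}(Z,\mathcal{S}_{+}^{n,r})\le\kappa'{\rm dist}(Z,\mathbb{R}_{+}^{n\times r})$ for all $Z\in{\rm St}(n,r)$, there exists $\delta>0$ such that for all $X\in{\rm St}(n,r)$ with $\|X-X^*\|_F\le\delta$, $f(X)-f(X^* )+2\gamma(\kappa')^2L'\,e_\gamma\vartheta(X)\ge0$; 2. if $n>r>1$, with $\kappa:=\frac{2.1\sqrt{r}[1+3r(n-r)]}{X^*_{i^*j^*}}$ ($X^*_{i^*j^*}$ the smallest nonzero entry of $X^*$), there exists $\delta>0$ such that for all $\epsilon\ge0$ and all $X\in\mathcal{G}_\epsilon:=\{X\in{\rm St}(n,r): e_\gamma\vartheta(X)=\epsilon\}$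 with $\|X-X^*\|_F\le\delta$, $f(X)-f(X^* )+2\gamma\kappa^2L'\,e_\gamma\vartheta(X)\ge0$. Consequently, there exists $\widehat{\rho}>0$ such that for every $\rho\ge\widehat{\rho}$ the problem $\min_{X\in{\rm St}(n,r)}\{f(X)+\rho\, e_\gamma\vartheta(X)\}$ has the same set of global optimal solutions as (P).
   Context: ${\rm St}(n,r):=\{X\in\mathbb{R}^{n\times r}: X^\top X=I_r\}$, $\mathbb{R}_{+}^{n\times r}$ the entrywise nonnegative matrices, $\mathcal{S}_{+}^{n,r}:=\mathbb{R}_{+}^{n\times r}\cap{\rm St}(n,r)$, ${\rm dist}$ the Frobenius-norm distance and ${\rm Proj}_{\Omega}(X)$ the (set of) nearest points of $\Omega$ to $X$ in Frobenius norm. $\vartheta(X):=\sum_{i,j}\max(0,-X_{ij})$, and $e_\gamma\vartheta(X):=\min_{Z\in\mathbb{R}^{n\times r}}\{\frac{1}{2\gamma}\|Z-X\|_F^2+\vartheta(Z)\}$ is its Moreau envelope. *)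

(* Defs.v *)
From HB Require Import structures.
From mathcomp Require Import all_boot all_order all_algebra.
From mathcomp Require Import all_classical all_reals all_analysis.
Set Implicit Arguments. Unset Strict Implicit. Unset Printing Implicit Defensive.
Import Order.TTheory GRing.Theory Num.Theory.
Import numFieldNormedType.Exports.
Local Open Scope classical_set_scope.
Local Open Scope ring_scope.

Section Defs.
Variables (R : realType) (n r : nat).
Notation M := 'M[R]_(n, r).

Definition frob (X : M) : R := Num.sqrt (\sum_i \sum_j X i j ^+ 2).

Definition Stiefel : set M := [set X | X^T *m X = 1%:M].
Definition Nonneg : set M := [set X | forall i j, 0 <= X i j].
Definition Splus : set M := Nonneg `&` Stiefel.

Definition dist (X : M) (S : set M) : R := inf [set frob (X - Y) | Y in S].

Definition is_proj (S : set M) (X Xbar : M) : Prop :=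
  S Xbar /\ forall Y, S Y -> frob (X - Xbar) <= frob (X - Y).

Definition vartheta (X : M) : R := \sum_i \sum_j Num.max 0 (- X i j).

(* Moreau envelope e_gamma vartheta (the min is attained, so inf = min) *)
Definition moreau (gamma : R) (X : M) : R :=
  inf [set (2 * gamma)^-1 * frob (Z - X) ^+ 2 + vartheta Z | Z in [set: M]].

Definition min_nonzero_entry (X : M) : R :=
  inf [set x | exists i j, x = X i j /\ x != 0].

Definition global_min (f : M -> R) (X : M) : Prop :=
  Splus X /\ forall Y, Splus Y -> f X <= f Y.
Definition local_min (f : M -> R) (X : M) : Prop :=
  Splus X /\ exists e : R, 0 < e /\
    forall Y, Splus Y -> frob (Y - X) <= e -> f X <= f Y.

Definition growth_cond (f : M -> R) (Xs : M) (delta' L' : R) : Prop :=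
  0 < delta' /\ 0 < L' /\
  forall X Xbar, Stiefel X -> frob (X - Xs) <= delta' -> is_proj Splus X Xbar ->
    f X - f Xbar >= - L' * frob (X - Xbar) ^+ 2.

Definition hyps (ismin : M -> Prop) (f : M -> R) : Prop :=
  ((r < n)%N -> (1 < r)%N -> forall X, ismin X -> forall i, exists j, X i j != 0)
  /\ (forall X, ismin X -> exists delta' L', growth_cond f X delta' L').

Definition concl (ismin : M -> Prop) (f : M -> R) (gamma : R) : Prop :=
  forall Xs, ismin Xs -> forall delta' L', growth_cond f Xs delta' L' ->
  ((n = r \/ ((r < n)%N /\ r = 1%N)) ->
     forall kappa' : R, 0 < kappa' ->
     (forall Z, Stiefel Z -> dist Z Splus <= kappa' * dist Z Nonneg) ->
     exists delta : R, 0 < delta /\ forall X, Stiefel X -> frob (X - Xs) <= delta ->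
       f X - f Xs + 2 * gamma * kappa' ^+ 2 * L' * moreau gamma X >= 0)
  /\
  (((r < n)%N /\ (1 < r)%N) ->
     let kappa := (21 / 10) * Num.sqrt (r%:R) * (1 + 3 * (r * (n - r))%N%:R)
                  / min_nonzero_entry Xs in
     exists delta : R, 0 < delta /\ forall eps : R, 0 <= eps ->
       forall X, Stiefel X -> moreau gamma X = eps -> frob (X - Xs) <= delta ->
       f X - f Xs + 2 * gamma * kappa ^+ 2 * L' * moreau gamma X >= 0).

Definition penalty_global_min (f : M -> R) (gamma rho : R) (X : M) : Prop :=
  Stiefel X /\ forall Y, Stiefel Y ->
    f X + rho * moreau gamma X <= f Y + rho * moreau gamma Y.

Definition C1_on (O : set M) (f : M -> R) : Prop :=
  (forall X, O X -> differentiable f X) /\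
  (forall i j, {within O, continuous (fun X => 'D_(delta_mx i j) f X)}).

End Defs.

(* Main.v *)
Require Import Defs.
From HB Require Import structures.
From mathcomp Require Import all_boot all_order all_algebra.
From mathcomp Require Import all_classical all_reals all_analysis.
From mathcomp Require Import ring lra zify.
Import Order.TTheory GRing.Theory Num.Theory.
Import numFieldNormedType.Exports.
Local Open Scope classical_set_scope.
Local Open Scope ring_scope.

Set Implicit Arguments. Unset Strict Implicit. Unset Printing Implicit Defensive.

Section Alg.
Variables (R : realType) (n r : nat).
Notation M := 'M[R]_(n, r).
Implicit Types (A B X Y : M).

Definition ssq X : R := \sum_i \sum_j X i j ^+ 2.
Definition inner A B : R := \sum_i \sum_j A i j * B i j.

Lemma ssq_ge0 X : 0 <= ssq X.
Proof. by apply: sumr_ge0 => i _; apply: sumr_ge0 => j _; exact: sqr_ge0. Qed.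

Lemma frobE X : frob X = Num.sqrt (ssq X). Proof. by []. Qed.
Lemma frob_ge0 X : 0 <= frob X. Proof. exact: sqrtr_ge0. Qed.
Lemma frob_sq X : frob X ^+ 2 = ssq X. Proof. by rewrite sqr_sqrtr // ssq_ge0. Qed.

Lemma ssqD A B : ssq (A + B) = ssq A + 2 * inner A B + ssq B.
Proof.
rewrite /ssq /inner mulr_sumr -!big_split; apply: eq_bigr => i _.
rewrite mulr_sumr -!big_split; apply: eq_bigr => j _; rewrite !mxE /=; ring.
Qed.

Lemma ssqZ t B : ssq (t *: B) = t ^+ 2 * ssq B.
Proof.
rewrite /ssq mulr_sumr; apply: eq_bigr => i _.
rewrite mulr_sumr; apply: eq_bigr => j _; rewrite !mxE; ring.
Qed.

Lemma innerZ t A B : inner A (t *: B) = t * inner A B.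
Proof.
rewrite /inner mulr_sumr; apply: eq_bigr => i _.
rewrite mulr_sumr; apply: eq_bigr => j _; rewrite !mxE; ring.
Qed.

Lemma ssq_eq0 X : ssq X = 0 -> forall i j, X i j = 0.
Proof.
move=> H i j.
have H1 := psumr_eq0P (fun i _ => sumr_ge0 _ (fun j _ => sqr_ge0 (X i j))) H.
have H2 := psumr_eq0P (fun j _ => sqr_ge0 (X i j)) (H1 i isT).
by apply/eqP; rewrite -sqrf_eq0; apply/eqP; apply: H2.
Qed.

Lemma CS A B : inner A B ^+ 2 <= ssq A * ssq B.
Proof.
have [b0|bn0] := eqVneq (ssq B) 0.
  have -> : inner A B = 0.
    rewrite /inner big1 // => i _; rewrite big1 // => j _.
    by rewrite (ssq_eq0 b0) mulr0.
  by rewrite expr0n /= mulr_ge0 // ssq_ge0.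
have bp : 0 < ssq B by rewrite lt0r bn0 ssq_ge0.
have := ssq_ge0 (A + (- (inner A B / ssq B)) *: B).
rewrite ssqD ssqZ innerZ => H.
have e : ssq A + 2 * (- (inner A B / ssq B) * inner A B) +
    (- (inner A B / ssq B)) ^+ 2 * ssq B = ssq A - inner A B ^+ 2 / ssq B.
  by field; rewrite bn0.
rewrite e subr_ge0 ler_pdivrMr // in H.
Qed.

Lemma inner_le A B : inner A B <= frob A * frob B.
Proof.
have h : `|inner A B| <= frob A * frob B.
  rewrite -sqrtr_sqr /frob -sqrtrM ?ssq_ge0 // ler_sqrt ?CS //.
  by rewrite mulr_ge0 // ssq_ge0.
exact: le_trans (ler_norm _) h.
Qed.

Lemma frobD A B : frob (A + B) <= frob A + frob B.
Proof.
rewrite -(ger0_norm (addr_ge0 (frob_ge0 A) (frob_ge0 B))) -sqrtr_sqr [frob (A + B)]frobE.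
rewrite ler_sqrt ?sqr_ge0 // sqrrD !frob_sq ssqD.
have := inner_le A B; lra.
Qed.

Lemma frobN X : frob (- X) = frob X.
Proof.
rewrite /frob /ssq; congr Num.sqrt; apply: eq_bigr => i _.
by apply: eq_bigr => j _; rewrite mxE sqrrN.
Qed.

Lemma frobB A B : frob (A - B) = frob (B - A).
Proof. by rewrite -frobN opprB. Qed.

Lemma frob_tri A B C : frob (A - C) <= frob (A - B) + frob (B - C).
Proof.
have -> : A - C = (A - B) + (B - C) by rewrite addrA subrK.
exact: frobD.
Qed.

Lemma sum_ge_term (I : finType) (F : I -> R) i0 :
  (forall i, 0 <= F i) -> F i0 <= \sum_i F i.
Proof. by move=> H; rewrite (bigD1 i0) //= lerDl sumr_ge0. Qed.

Lemma entry_sq_le X i j : X i j ^+ 2 <= ssq X.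
Proof.
apply: le_trans _ (sum_ge_term i (fun i => sumr_ge0 _ (fun j _ => sqr_ge0 (X i j)))).
exact: (sum_ge_term j (fun j => sqr_ge0 (X i j))).
Qed.

Lemma entry_le X i j : `|X i j| <= frob X.
Proof. by rewrite -sqrtr_sqr ler_sqrt ?entry_sq_le // ssq_ge0. Qed.

Lemma sq_sum_ge (I : Type) (s : seq I) (c : I -> R) :
  (forall i, 0 <= c i) -> \sum_(i <- s) c i ^+ 2 <= (\sum_(i <- s) c i) ^+ 2.
Proof.
move=> H; elim: s => [|a s IH]; first by rewrite !big_nil expr0n.
rewrite !big_cons sqrrD.
have : 0 <= c a * \sum_(i <- s) c i by rewrite mulr_ge0 // sumr_ge0.
have := H a; lra.
Qed.

Definition l1 X : R := \sum_i \sum_j `|X i j|.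

Lemma frob_le_l1 X : frob X <= l1 X.
Proof.
have l0 : 0 <= l1 X by apply: sumr_ge0 => i _; apply: sumr_ge0.
rewrite -(ger0_norm l0) -sqrtr_sqr ler_sqrt ?sqr_ge0 //.
rewrite /ssq /l1 !pair_big /=.
apply: le_trans (sq_sum_ge _ (fun p : 'I_n * 'I_r => normr_ge0 (X p.1 p.2))).
by apply: ler_sum => p _; rewrite real_normK // num_real.
Qed.

Lemma l1_le X : l1 X <= Num.sqrt (n * r)%:R * frob X.
Proof.
pose A : M := const_mx 1.
pose B : M := \matrix_(i, j) `|X i j|.
have e1 : inner A B = l1 X.
  by apply: eq_bigr => i _; apply: eq_bigr => j _; rewrite !mxE mul1r.
have e2 : ssq A = (n * r)%:R.
  rewrite /ssq (eq_bigr (fun _ => r%:R)); last first.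
    move=> i _; rewrite (eq_bigr (fun _ => 1)); last by move=> j _; rewrite mxE expr1n.
    by rewrite sumr_const card_ord.
  by rewrite sumr_const card_ord natrM mulrC mulr_natr.
have e3 : ssq B = ssq X.
  by apply: eq_bigr => i _; apply: eq_bigr => j _; rewrite mxE real_normK // num_real.
have fB : frob B = frob X by rewrite !frobE e3.
by have := inner_le A B; rewrite e1 [frob A]frobE e2 fB.
Qed.

End Alg.


Lemma moreau_entry (R : realType) (g K x z : R) : 0 < g -> g <= K -> -K <= x ->
  (2 * K)^-1 * (Num.max 0 (- x)) ^+ 2 <= (2 * g)^-1 * (z - x) ^+ 2 + Num.max 0 (- z).
Proof.
move=> g0 gK xK.
have K0 : 0 < K by apply: lt_le_trans gK.
set a := (2 * g)^-1; set b := (2 * K)^-1.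
have b0 : 0 < b by rewrite invr_gt0 mulr_gt0.
have ba : b <= a by rewrite lef_pV2 ?posrE ?mulr_gt0 // ler_pM2l.
have bK : b * K * z * 2 = z by rewrite /b; field; rewrite gt_eqF.
have hz : 0 <= Num.max 0 (- z) by rewrite le_max lexx.
have [x0|x0] := leP 0 x.
  rewrite (_ : Num.max 0 (- x) = 0); last by apply/max_idPl; rewrite oppr_le0.
  rewrite expr0n /= mulr0 addr_ge0 // mulr_ge0 ?sqr_ge0 //; exact: ltW (lt_le_trans b0 ba).
rewrite (_ : Num.max 0 (- x) = - x); last by apply/max_idPr; rewrite oppr_ge0 ltW.
have h1 : 0 <= (a - b) * (z - x) ^+ 2 by rewrite mulr_ge0 ?sqr_ge0 // subr_ge0.
have [z0|z0] := leP 0 z.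
  rewrite (_ : Num.max 0 (- z) = 0); last by apply/max_idPl; rewrite oppr_le0.
  have h2 : 0 <= b * (z * (z - 2 * x)).
    by apply: mulr_ge0; [exact: ltW | apply: mulr_ge0; lra].
  lra.
rewrite (_ : Num.max 0 (- z) = - z); last by apply/max_idPr; rewrite oppr_ge0 ltW.
have h2 : 0 <= b * z * (z - 2 * x - 2 * K).
  rewrite -mulrA; apply: mulr_ge0; first exact: ltW.
  rewrite nmulr_rge0 //; lra.
lra.
Qed.

Section Moreau.
Variables (R : realType) (n r : nat).
Notation M := 'M[R]_(n, r).
Implicit Types (A B X Y Z : M).

Definition negm X : M := \matrix_(i, j) Num.max 0 (- X i j).
Definition posm X : M := \matrix_(i, j) Num.max 0 (X i j).

Lemma vartheta_ge0 X : 0 <= vartheta X.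
Proof. by apply: sumr_ge0 => i _; apply: sumr_ge0 => j _; rewrite le_max lexx. Qed.

Lemma moreau_lbound (g : R) X : 0 < g ->
  lbound [set (2 * g)^-1 * frob (Z - X) ^+ 2 + vartheta Z | Z in [set: M]] 0.
Proof.
move=> g0 _ [Z _ <-]; apply: addr_ge0 (vartheta_ge0 Z).
by rewrite mulr_ge0 ?sqr_ge0 // invr_ge0 mulr_ge0 // ltW.
Qed.

Lemma moreau_ge0 (g : R) X : 0 < g -> 0 <= moreau g X.
Proof.
move=> g0; apply: lb_le_inf; last exact: moreau_lbound.
by exists ((2 * g)^-1 * frob (X - X) ^+ 2 + vartheta X), X.
Qed.

Lemma moreau_le (g : R) X Z : 0 < g ->
  moreau g X <= (2 * g)^-1 * frob (Z - X) ^+ 2 + vartheta Z.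
Proof.
move=> g0; rewrite /moreau; have := ge_inf (ex_intro _ 0 (moreau_lbound (g:=g) (X:=X) g0)).
move=> /(_ ((2 * g)^-1 * frob (Z - X) ^+ 2 + vartheta Z)); apply.
by exists Z.
Qed.

Lemma vartheta_nonneg X : Nonneg X -> vartheta X = 0.
Proof.
move=> H; apply: big1 => i _; apply: big1 => j _.
by apply/max_idPl; rewrite oppr_le0.
Qed.

Lemma frob0 : frob (0 : M) = 0.
Proof.
rewrite frobE (_ : ssq 0 = 0) ?sqrtr0 //.
by apply: big1 => i _; apply: big1 => j _; rewrite mxE expr0n.
Qed.

Lemma moreau_nonneg (g : R) X : 0 < g -> Nonneg X -> moreau g X = 0.
Proof.
move=> g0 H; apply/le_anti; rewrite moreau_ge0 // andbT.
by have := moreau_le X X g0; rewrite subrr frob0 vartheta_nonneg // expr0n /= mulr0 addr0.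
Qed.

Lemma moreau_lb (g K : R) X : 0 < g -> g <= K -> (forall i j, - K <= X i j) ->
  (2 * K)^-1 * ssq (negm X) <= moreau g X.
Proof.
move=> g0 gK HX; apply: lb_le_inf.
  by exists ((2 * g)^-1 * frob (X - X) ^+ 2 + vartheta X), X.
move=> _ [Z _ <-].
rewrite frob_sq /ssq /vartheta !mulr_sumr -big_split /=.
apply: ler_sum => i _; rewrite !mulr_sumr -big_split /=.
apply: ler_sum => j _; rewrite !mxE.
exact: moreau_entry.
Qed.

Lemma dist_lbound X (S : set M) : lbound [set frob (X - Y) | Y in S] 0.
Proof. by move=> _ [Y _ <-]; exact: frob_ge0. Qed.

Lemma dist_le X (S : set M) Y : S Y -> dist X S <= frob (X - Y).
Proof.
move=> SY; rewrite /dist; have := ge_inf (ex_intro _ 0 (dist_lbound (X:=X) (S:=S))).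
move=> /(_ (frob (X - Y))); apply.
by exists Y.
Qed.

Lemma dist_ge0 X (S : set M) Y : S Y -> 0 <= dist X S.
Proof.
move=> SY; apply: lb_le_inf; last exact: dist_lbound.
by exists (frob (X - Y)), Y.
Qed.

Lemma dist_proj X (S : set M) Xb : is_proj S X Xb -> dist X S = frob (X - Xb).
Proof.
move=> [SXb H]; apply/le_anti; rewrite dist_le //=.
apply: lb_le_inf; first by exists (frob (X - Xb)), Xb.
by move=> _ [Y SY <-]; exact: H.
Qed.

Lemma dist_Nonneg_le X : dist X (@Nonneg R n r) <= frob (negm X).
Proof.
have NP : Nonneg (posm X) by move=> i j; rewrite mxE le_max lexx.
apply: le_trans (dist_le X NP) _.
have -> : X - posm X = - negm X.
  apply/matrixP => i j; rewrite !mxE.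
  have [x0|x0] := leP 0 (X i j).
    rewrite (_ : Num.max 0 (- X i j) = 0); last by apply/max_idPl; rewrite oppr_le0.
    by rewrite subrr oppr0.
  rewrite (_ : Num.max 0 (- X i j) = - X i j); last by apply/max_idPr; rewrite oppr_ge0 ltW.
  by rewrite subr0 opprK.
by rewrite frobN.
Qed.

End Moreau.


Section Topo.
Variables (R : realType) (n r : nat).
Notation M := 'M[R]_(n, r).
Implicit Types (A B X Y Z : M).

Lemma cont_sum (T : topologicalType) (I : Type) (s : seq I) (F : I -> T -> R) x :
  (forall i, {for x, continuous (F i)}) -> {for x, continuous (fun y => \sum_(i <- s) F i y)}.
Proof.
move=> H; apply: (@cvg_big R^o I +%R 0 xpredT) => //.
  exact: add_continuous.
by move=> i _; exact: H.
Qed.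

Lemma cont_ext (T : topologicalType) (f g : T -> R) x :
  (forall y, f y = g y) -> {for x, continuous g} -> {for x, continuous f}.
Proof. by move=> e; have E : f = g := funext e; subst. Qed.

Lemma cont_coord i j (X : M) : {for X, continuous (fun Y : M => Y i j)}.
Proof. exact: coord_continuous. Qed.

Lemma cont_ssq (F : M -> M) X : (forall i j, {for X, continuous (fun Y => F Y i j)}) ->
  {for X, continuous (fun Y => ssq (F Y))}.
Proof.
move=> H; apply: cont_sum => i; apply: cont_sum => j.
by apply: continuousM; apply: H.
Qed.

Lemma cont_frobB A X : {for X, continuous (fun Y : M => frob (A - Y))}.
Proof.
apply: (@continuous_comp _ _ _ (fun Y => ssq (A - Y)) Num.sqrt); last first.
  exact: sqrt_continuous.
apply: cont_ssq => i j /=.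
apply: (cont_ext (g := fun Y => A i j - Y i j)); first by move=> Y; rewrite !mxE.
apply: continuousB; first exact: cst_continuous.
exact: cont_coord.
Qed.


Definition StG X : R := \sum_j \sum_k (\sum_i X i j * X i k - (j == k)%:R) ^+ 2.

Lemma StTE X j k : (X^T *m X) j k = \sum_i X i j * X i k.
Proof. by rewrite mxE; apply: eq_bigr => i _; rewrite mxE. Qed.

Lemma StG_ge0 X : 0 <= StG X.
Proof. by apply: sumr_ge0 => j _; apply: sumr_ge0 => k _; exact: sqr_ge0. Qed.

Lemma St_iff X : Stiefel X <-> StG X <= 0.
Proof.
split.
  move=> H; rewrite le_eqVlt; apply/orP; left; apply/eqP.
  apply: big1 => j _; apply: big1 => k _.
  have := congr1 (fun A : 'M[R]_r => A j k) H => /=.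
  by rewrite StTE mxE => ->; rewrite subrr expr0n.
move=> H; have H0 : StG X = 0 by apply/le_anti; rewrite H StG_ge0.
apply/matrixP => j k; rewrite StTE mxE.
have H1 := psumr_eq0P (fun j _ => sumr_ge0 _ (fun k _ => sqr_ge0 _)) H0 (i:=j) isT.
have H2 := psumr_eq0P (fun k _ => sqr_ge0 _) H1 (i:=k) isT.
by move/eqP: H2; rewrite sqrf_eq0 subr_eq0 => /eqP.
Qed.

Lemma Nonneg_iff X : Nonneg X <-> ssq (negm X) <= 0.
Proof.
split.
  move=> H; rewrite le_eqVlt; apply/orP; left; apply/eqP.
  apply: big1 => i _; apply: big1 => j _.
  by rewrite mxE (_ : Num.max 0 (- X i j) = 0) ?expr0n //; apply/max_idPl; rewrite oppr_le0.
move=> H i j; have H0 : ssq (negm X) = 0 by apply/le_anti; rewrite H ssq_ge0.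
have := ssq_eq0 H0 i j; rewrite mxE => /max_idPl.
by rewrite oppr_le0.
Qed.

Lemma cont_StG X : {for X, continuous StG}.
Proof.
apply: cont_sum => j; apply: cont_sum => k.
apply: (cont_ext (g := fun Y : M => (\sum_i Y i j * Y i k - (j == k)%:R) * (\sum_i Y i j * Y i k - (j == k)%:R))).
  by move=> Y; rewrite expr2.
have h : {for X, continuous (fun Y : M => \sum_i Y i j * Y i k - (j == k)%:R)}.
  apply: continuousB; last exact: cst_continuous.
  apply: cont_sum => i; apply: continuousM; exact: cont_coord.
exact: continuousM.
Qed.

Lemma cont_negm X : {for X, continuous (fun Y : M => ssq (negm Y))}.
Proof.
apply: cont_ssq => i j.
apply: (cont_ext (g := fun Y : M => Num.max 0 (- Y i j))); first by move=> Y; rewrite mxE.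
apply: (continuous_max (f := fun=> 0) (g := fun Y : M => - Y i j)); first exact: cst_continuous.
by apply: continuousN; exact: cont_coord.
Qed.

Lemma closed_St : closed (@Stiefel R n r).
Proof.
have -> : @Stiefel R n r = StG @^-1` [set x | x <= 0].
  by apply/seteqP; split => X /=; rewrite St_iff.
apply: preimage_closed; last exact: closed_le.
move=> X _; exact: cont_StG.
Qed.

Lemma closed_Nonneg : closed (@Nonneg R n r).
Proof.
have -> : @Nonneg R n r = (fun Y : M => ssq (negm Y)) @^-1` [set x | x <= 0].
  by apply/seteqP; split => X /=; rewrite Nonneg_iff.
apply: preimage_closed; last exact: closed_le.
move=> X _; exact: cont_negm.
Qed.

Lemma closed_Splus : closed (@Splus R n r).
Proof. exact: closedI closed_Nonneg closed_St. Qed.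

Lemma St_entry X i j : Stiefel X -> `|X i j| <= 1.
Proof.
move=> H.
have e : \sum_i0 X i0 j ^+ 2 = 1.
  have := congr1 (fun A : 'M[R]_r => A j j) H; rewrite /= StTE mxE eqxx => h.
  rewrite (_ : (1:R) = true%:R) // -h.
have : X i j ^+ 2 <= 1 by rewrite -e; exact: (sum_ge_term i (fun i0 => sqr_ge0 (X i0 j))).
rewrite -real_normK ?num_real // => h.
have := normr_ge0 (X i j); nra.
Qed.


Lemma vec_mx_entry (v : 'rV[R]_(n * r)) i j : vec_mx v i j = v 0 (mxvec_index i j).
Proof. by rewrite -{2}(vec_mxK v) mxvecE. Qed.

Lemma cont_vec_mx : continuous (@vec_mx R n r).
Proof.
move=> v; apply/(@cvg_ballP R _ _ (nbhs v) (nbhs_filter v)) => e e0.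
near=> w; have [_ hw] : ball v e w by near: w; exact: nbhsx_ballx.
split => // i j; rewrite !vec_mx_entry; exact: hw.
Unshelve. all: by end_near.
Qed.

Lemma box_compact (A : set M) : closed A -> (forall X, A X -> forall i j, `|X i j| <= 1) ->
  compact A.
Proof.
move=> cA bA.
pose B := [set v : 'rV[R]_(n * r) | A (vec_mx v)].
have cB : compact B.
  apply: bounded_closed_compact.
    rewrite /= /bounded_near; near=> K => v /= Bv.
    rewrite [`|v|]/Num.norm /= mx_normrE; apply: bigmax_le; first by near: K; apply: nbhs_pinfty_ge; rewrite num_real.
    move=> [a k] _ /=; rewrite (ord1 a).
    case: (mxvec_indexP k) => i j; rewrite -vec_mx_entry.
    apply: le_trans (bA _ Bv i j) _.
    by near: K; apply: nbhs_pinfty_ge; rewrite num_real.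
  rewrite (_ : B = vec_mx @^-1` A) //.
  apply: preimage_closed => //; move=> v _; exact: cont_vec_mx.
have -> : A = vec_mx @` B.
  apply/seteqP; split => [X AX|_ [v Bv <-] //].
  by exists (mxvec X) => //; rewrite /B /= mxvecK.
apply: continuous_compact => //; exact: continuous_subspaceT cont_vec_mx.
Unshelve. all: by end_near.
Qed.


Lemma compact_St : compact (@Stiefel R n r).
Proof. apply: box_compact closed_St _ => X H i j; exact: St_entry. Qed.

Lemma compact_Splus : compact (@Splus R n r).
Proof. apply: box_compact closed_Splus _ => X [_ H] i j; exact: St_entry. Qed.

Definition E0 : M := \matrix_(i, j) ((i : nat) == (j : nat))%:R.

Lemma E0_Splus : (r <= n)%N -> Splus E0.
Proof.
move=> rn; split; first by move=> i j; rewrite mxE ler0n.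
apply/matrixP => j k; rewrite StTE mxE (bigD1 (widen_ord rn j)) //= big1 ?addr0.
  rewrite !mxE /= eqxx mul1r; congr (_%:R).
move=> i hi; rewrite !mxE.
suff -> : ((i : nat) == (j : nat)) = false by rewrite mul0r.
apply/negbTE; apply: contra hi => /eqP h; apply/eqP/val_inj => /=; exact: h.
Qed.

Lemma proj_exists X : (r <= n)%N -> exists Xb, is_proj (@Splus R n r) X Xb.
Proof.
move=> rn.
have [c cA H] := @compact_EVT_min M R (fun Y => frob (X - Y)) (@Splus R n r)
  (ex_intro _ E0 (E0_Splus rn)) compact_Splus
  (continuous_subspaceT (fun Y => cont_frobB (A:=X) (X:=Y))).
exists c; split; first by rewrite inE in cA.
by move=> Y SY; apply: H; rewrite inE.
Qed.

Lemma min_exists (f : M -> R) : (r <= n)%N -> (forall X, Splus X -> {for X, continuous f}) ->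
  exists Xs, global_min f Xs.
Proof.
move=> rn cf.
have [c cA H] := @compact_EVT_min M R f (@Splus R n r)
  (ex_intro _ E0 (E0_Splus rn)) compact_Splus
  (continuous_in_subspaceT (fun Y hY => cf Y (set_mem hY))).
exists c; split; first by rewrite inE in cA.
by move=> Y SY; apply: H; rewrite inE.
Qed.

End Topo.


Section Core.
Variables (R : realType) (n r : nat).
Notation M := 'M[R]_(n, r).
Implicit Types (A B X Y Z : M).

Lemma core (f : M -> R) (g : R) Xs d' L' e K d0 :
  (r <= n)%N -> 0 < g -> Splus Xs -> 0 < e ->
  (forall Y, Splus Y -> frob (Y - Xs) <= e -> f Xs <= f Y) ->
  growth_cond f Xs d' L' -> 0 < d0 -> 0 <= K ->
  (forall X, Stiefel X -> frob (X - Xs) <= d0 -> dist X (@Splus R n r) <= K * frob (negm X)) ->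
  exists d : R, 0 < d /\ forall X, Stiefel X -> frob (X - Xs) <= d ->
    f X - f Xs + 2 * g * K ^+ 2 * L' * moreau g X >= 0.
Proof.
move=> rn g0 SXs e0 Hmin [d'0 [L'0 Hg]] d00 K0 HK.
exists (Num.min d0 (Num.min d' (Num.min (e / 2) g))).
split; first by rewrite !lt_min d00 d'0 g0 divr_gt0.
move=> X SX; rewrite !le_min => /and4P [h0 h' he hg].
have [Xb Pb] := proj_exists X rn.
have dE := dist_proj Pb.
have [SXb HXb] := Pb.
have h1 : frob (X - Xb) <= frob (X - Xs) := HXb Xs SXs.
have h2 : frob (Xb - Xs) <= e.
  apply: le_trans (frob_tri Xb X Xs) _.
  rewrite frobB; have := frob_ge0 (X - Xs); lra.
have h3 := Hmin Xb SXb h2.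
have h4 := Hg X Xb SX h' Pb.
have h5 : frob (X - Xb) <= K * frob (negm X) by rewrite -dE; apply: HK.
have h6 : frob (X - Xb) ^+ 2 <= K ^+ 2 * ssq (negm X).
  rewrite -[ssq (negm X)]frob_sq; have := frob_ge0 (X - Xb); have := frob_ge0 (negm X); nra.
have h7 : (2 * g)^-1 * ssq (negm X) <= moreau g X.
  apply: moreau_lb => // i j.
  have hij := entry_le (X - Xs) i j; rewrite !mxE in hij.
  have hn : Xs i j - X i j <= `|X i j - Xs i j| by rewrite distrC ler_norm.
  have := SXs.1 i j; lra.
have h8 : ssq (negm X) <= 2 * g * moreau g X.
  by rewrite -ler_pdivrMl ?mulr_gt0.
have h9 : 0 <= L' * K ^+ 2 by rewrite mulr_ge0 ?sqr_ge0 // ltW.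
have h10 : L' * frob (X - Xb) ^+ 2 <= L' * (K ^+ 2 * ssq (negm X)) by rewrite ler_pM2l.
have h11 : L' * K ^+ 2 * ssq (negm X) <= L' * K ^+ 2 * (2 * g * moreau g X) by rewrite ler_wpM2l.
have e1 : L' * (K ^+ 2 * ssq (negm X)) = L' * K ^+ 2 * ssq (negm X) by ring.
have e2 : L' * K ^+ 2 * (2 * g * moreau g X) = 2 * g * K ^+ 2 * L' * moreau g X by ring.
lra.
Qed.

End Core.


Section EB.
Variables (R : realType) (n r : nat).
Notation M := 'M[R]_(n, r).
Implicit Types (A B X Y Z : M).

Lemma sep (Xs : M) i j k : Splus Xs -> Xs i j != 0 -> Xs i k != 0 -> j = k.
Proof.
move=> [NX SX] hj hk; apply/eqP; apply/negPn/negP => jk.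
have := congr1 (fun A : 'M[R]_r => A j k) SX; rewrite /= StTE mxE (negbTE jk) /=.
have pos : 0 < Xs i j * Xs i k.
  by rewrite mulr_gt0 // lt0r ?hj ?hk ?NX.
have := sum_ge_term (F := fun i0 => Xs i0 j * Xs i0 k) i (fun i0 => mulr_ge0 (NX i0 j) (NX i0 k)).
move=> h1 h2; move: h1; rewrite h2 => h1.
by have := lt_le_trans pos h1; rewrite ltxx.
Qed.

Lemma sqsum_expand (I J : finType) (F : I -> J -> R) :
  \sum_i (\sum_j F i j) ^+ 2 = \sum_j \sum_k \sum_i F i j * F i k.
Proof.
under eq_bigr => i _ do rewrite expr2 mulr_suml; rewrite exchange_big /=.
apply: eq_bigr => j _; under eq_bigr => i _ do rewrite mulr_sumr; rewrite exchange_big /=.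
by [].
Qed.

Lemma L_ID X : Stiefel X -> \sum_i (\sum_j X i j) ^+ 2 = \sum_i \sum_j X i j ^+ 2.
Proof.
move=> SX; rewrite sqsum_expand [RHS]exchange_big /=.
apply: eq_bigr => j _.
have e : forall k, \sum_i X i j * X i k = (j == k)%:R.
  by move=> k; have := congr1 (fun A : 'M[R]_r => A j k) SX; rewrite /= StTE mxE.
rewrite (eq_bigr (fun k => (j == k)%:R)); last by move=> k _; exact: e.
rewrite (bigD1 j) //= big1 ?addr0; last by move=> k kj; rewrite eq_sym (negbTE kj).
by rewrite -(e j); apply: eq_bigr => i _; rewrite expr2.
Qed.

Definition Ym X (s : 'I_n -> 'I_r) : M := \matrix_(i, j) (if j == s i then X i j else 0).
Definition Om X (s : 'I_n -> 'I_r) : M := \matrix_(i, j) (if j == s i then 0 else X i j).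

Lemma YOm X s : X = Ym X s + Om X s.
Proof. by apply/matrixP => i j; rewrite !mxE; case: ifP; rewrite ?addr0 ?add0r. Qed.

Lemma Ym_row (F : R -> R) X s i : F 0 = 0 -> \sum_j F (Ym X s i j) = F (X i (s i)).
Proof.
move=> F0; rewrite (bigD1 (s i)) //= big1 ?addr0; first by rewrite mxE eqxx.
by move=> j hj; rewrite mxE (negbTE hj).
Qed.


Lemma Ym_row1 X s i : \sum_j Ym X s i j = X i (s i).
Proof. exact: (Ym_row (F := fun x => x)). Qed.

Lemma Om_entry X s i j : Om X s i j = if j == s i then 0 else X i j.
Proof. by rewrite mxE. Qed.

Lemma Ym_entry X s i j : Ym X s i j = if j == s i then X i j else 0.
Proof. by rewrite mxE. Qed.

Lemma L_key X (sg : 'I_n -> 'I_r) (mu d : R) :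
  Stiefel X -> 0 <= d -> 3 * d <= mu ->
  (forall i, mu - d <= X i (sg i)) -> (forall i j, j != sg i -> `|X i j| <= d) ->
  mu * l1 (Om X sg) <= 4 * l1 (negm X).
Proof.
move=> SX d0 dmu Hs Ho.
pose t i := \sum_j Om X sg i j.
pose w i := \sum_j Om X sg i j ^+ 2.
pose a i := \sum_j `|Om X sg i j|.
pose nu i := \sum_j `|negm X i j|.
have s1 : forall i, X i (sg i) <= 1.
  by move=> i; apply: le_trans (ler_norm _) (St_entry _ _ SX).
have sp : forall i, 0 <= X i (sg i).
  by move=> i; have := Hs i; lra.
have rowsum : forall i, \sum_j X i j = X i (sg i) + t i.
  move=> i; rewrite -(Ym_row1 X sg i) /t -big_split /=.
  by apply: eq_bigr => j _; rewrite {1}(YOm X sg) mxE.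
have rowsq : forall i, \sum_j X i j ^+ 2 = X i (sg i) ^+ 2 + w i.
  move=> i; rewrite /w (bigD1 (sg i)) //= [in RHS](bigD1 (sg i)) //= Om_entry eqxx expr0n /= add0r.
  by congr (_ + _); apply: eq_bigr => j hj; rewrite Om_entry (negbTE hj).
have ID := L_ID SX.
have ID2 : \sum_i (X i (sg i) + t i) ^+ 2 = \sum_i (X i (sg i) ^+ 2 + w i).
  rewrite -(eq_bigr _ (fun i _ => rowsq i)) -ID.
  by apply: eq_bigr => i _; rewrite rowsum.
have E : \sum_i (2 * X i (sg i) * t i - w i) <= 0.
  have h : \sum_i ((X i (sg i) + t i) ^+ 2 - (X i (sg i) ^+ 2 + w i)) = 0.
    by rewrite sumrB ID2 subrr.
  rewrite -[X in _ <= X]h; apply: ler_sum => i _; have := sqr_ge0 (t i); lra.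
have tE : forall i, t i = a i - 2 * nu i.
  move=> i; rewrite /t /a /nu mulr_sumr -sumrB; apply: eq_bigr => j _.
  rewrite Om_entry mxE; case: eqP => [->|hj].
    rewrite (_ : Num.max 0 (- X i (sg i)) = 0); last by apply/max_idPl; rewrite oppr_le0.
    by rewrite normr0 mulr0 subr0.
  have [x0|x0] := leP 0 (X i j).
    rewrite (_ : Num.max 0 (- X i j) = 0); last by apply/max_idPl; rewrite oppr_le0.
    by rewrite normr0 mulr0 subr0 ger0_norm.
  rewrite (_ : Num.max 0 (- X i j) = - X i j); last by apply/max_idPr; rewrite oppr_ge0 ltW.
  rewrite ltr0_norm // ger0_norm; last by rewrite oppr_ge0 ltW.
  lra.
have wE : forall i, w i <= d * a i.
  move=> i; rewrite /w /a mulr_sumr; apply: ler_sum => j _.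
  rewrite Om_entry; case: eqP => [_|hj]; first by rewrite normr0 mulr0 expr0n.
  have := Ho i j (introN eqP hj); rewrite -real_normK ?num_real // => h.
  have := normr_ge0 (X i j); nra.
have a0 : forall i, 0 <= a i by move=> i; apply: sumr_ge0.
have nu0 : forall i, 0 <= nu i by move=> i; apply: sumr_ge0.
have F : \sum_i ((2 * mu - 3 * d) * a i - 4 * nu i) <= 0.
  apply: le_trans E; apply: ler_sum => i _.
  have h1 : (mu - d) * a i <= X i (sg i) * a i by rewrite ler_wpM2r.
  have h2 : X i (sg i) * nu i <= nu i.
    by have := ler_wpM2r (nu0 i) (s1 i); rewrite mul1r.
  have h3 := wE i.
  rewrite tE; lra.
rewrite sumrB -!mulr_sumr in F.
have eA : l1 (Om X sg) = \sum_i a i by [].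
have eN : l1 (negm X) = \sum_i nu i by [].
rewrite eA eN.
have A0 : 0 <= \sum_i a i by apply: sumr_ge0.
have h : 0 <= (mu - 3 * d) * \sum_i a i by rewrite mulr_ge0 // subr_ge0.
lra.
Qed.


Lemma L_Yh X sg : Stiefel X -> (forall i, 0 < X i (sg i)) -> ssq (Om X sg) < 1 ->
  exists Y, Splus Y /\ frob (Ym X sg - Y) <= ssq (Om X sg).
Proof.
move=> SX Xp Os.
pose q j := \sum_i Om X sg i j ^+ 2.
pose c j := Num.sqrt (\sum_i Ym X sg i j ^+ 2).
have colX : forall j, \sum_i X i j ^+ 2 = 1.
  move=> j; have := congr1 (fun A : 'M[R]_r => A j j) SX; rewrite /= StTE mxE eqxx => h.
  by rewrite (_ : (1:R) = true%:R) // -h; apply: eq_bigr => i _; rewrite expr2.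
have colsplit : forall j, \sum_i Ym X sg i j ^+ 2 + q j = 1.
  move=> j; rewrite -(colX j) /q -big_split /=; apply: eq_bigr => i _.
  by rewrite Om_entry Ym_entry; case: ifP; rewrite expr0n /= ?addr0 ?add0r.
have q0 : forall j, 0 <= q j by move=> j; apply: sumr_ge0 => i _; exact: sqr_ge0.
have sumq : \sum_j q j = ssq (Om X sg) by rewrite /q /ssq exchange_big.
have qle : forall j, q j <= ssq (Om X sg).
  by move=> j; rewrite -sumq; exact: (sum_ge_term j q0).
have Ym0 : forall j, 0 <= \sum_i Ym X sg i j ^+ 2 by move=> j; apply: sumr_ge0 => i _; exact: sqr_ge0.
have c2 : forall j, c j ^+ 2 = 1 - q j.
  by move=> j; rewrite sqr_sqrtr // -(colsplit j) addrK.
have cpos : forall j, 0 < c j.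
  move=> j; rewrite sqrtr_gt0.
  have := colsplit j; have := qle j; lra.
have cle1 : forall j, c j <= 1.
  move=> j; have := c2 j; have := q0 j; have := cpos j; nra.
have Ymnn : forall i j, 0 <= Ym X sg i j.
  move=> i j; rewrite Ym_entry; case: eqP => [e|_] //; rewrite e; exact: ltW.
pose Y : M := \matrix_(i, j) (Ym X sg i j / c j).
exists Y; split.
  split; first by move=> i j; rewrite mxE divr_ge0 // ltW.
  apply/matrixP => j k; rewrite StTE mxE.
  have [<-|jk] := eqVneq j k.
    have cn : c j != 0 by rewrite gt_eqF.
    rewrite (eq_bigr (fun i => Ym X sg i j ^+ 2 / c j ^+ 2)); last first.
      by move=> i _; rewrite !mxE; field.
    by rewrite -mulr_suml -(sqr_sqrtr (Ym0 j)) -/(c j) divff // sqrf_eq0.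
  rewrite big1 // => i _; rewrite !mxE.
  case: (eqVneq j (sg i)) => [hj|hj]; last by rewrite !mul0r.
  case: (eqVneq k (sg i)) => [hk|hk]; last by rewrite mul0r mulr0.
  by move: jk; rewrite hj hk eqxx.
have e1 : ssq (Ym X sg - Y) = \sum_j (c j - 1) ^+ 2.
  rewrite /ssq exchange_big /=; apply: eq_bigr => j _.
  have cn : c j != 0 by rewrite gt_eqF.
  rewrite (eq_bigr (fun i => (1 - (c j)^-1) ^+ 2 * Ym X sg i j ^+ 2)); last first.
    by move=> i _; rewrite !mxE; field.
  rewrite -mulr_sumr -(sqr_sqrtr (Ym0 j)) -/(c j); by field.
have e2 : forall j, (c j - 1) ^+ 2 <= q j ^+ 2.
  move=> j; have := c2 j; have := cpos j; have := cle1 j; have := q0 j; nra.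
have e3 : ssq (Ym X sg - Y) <= ssq (Om X sg) ^+ 2.
  rewrite e1 -sumq; apply: le_trans (sq_sum_ge _ q0).
  by apply: ler_sum => j _; exact: e2.
rewrite frobE -(ger0_norm (ssq_ge0 (Om X sg))) -sqrtr_sqr ler_sqrt //; exact: sqr_ge0.
Qed.


Lemma EB (Xs : M) (sg : 'I_n -> 'I_r) (mu : R) :
  Splus Xs -> (forall i j, j != sg i -> Xs i j = 0) -> 0 < mu ->
  (forall i, mu <= Xs i (sg i)) ->
  exists d : R, 0 < d /\ forall X, Stiefel X -> frob (X - Xs) <= d ->
    dist X (@Splus R n r) <= 9 / 2 * Num.sqrt (n * r)%:R / mu * frob (negm X).
Proof.
move=> SXs Hoff mu0 Hmu.
set D : R := (n * r)%:R.
have D0 : 0 <= D by rewrite /D ler0n.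
exists (Num.min (mu / 3) (1 / (8 * (D + 1)))).
split; first by rewrite lt_min !divr_gt0 // mulr_gt0 // ltr_pwDr.
move=> X SX; rewrite le_min => /andP [h1 h2].
have ent : forall i j, `|X i j - Xs i j| <= frob (X - Xs).
  by move=> i j; have h := entry_le (X - Xs) i j; rewrite !mxE in h.
set d := frob (X - Xs) in h1 h2 ent *.
have d0 : 0 <= d := frob_ge0 _.
have d3 : 3 * d <= mu by move: h1; rewrite ler_pdivlMr //; lra.
have dD : d * (8 * (D + 1)) <= 1 by move: h2; rewrite ler_pdivlMr ?mul1r // mulr_gt0 // ltr_pwDr.
have Hs : forall i, mu - d <= X i (sg i).
  move=> i; have := ent i (sg i); have := Hmu i.
  have := ler_norm (Xs i (sg i) - X i (sg i)); rewrite distrC; lra.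
have Ho : forall i j, j != sg i -> `|X i j| <= d.
  by move=> i j hj; have := ent i j; rewrite Hoff // subr0.
have Xp : forall i, 0 < X i (sg i) by move=> i; have := Hs i; lra.
have Os : ssq (Om X sg) <= D * d ^+ 2.
  have -> : D * d ^+ 2 = \sum_(i < n) \sum_(j < r) d ^+ 2.
    by rewrite !sumr_const !card_ord /D -mulr_natr -mulr_natr natrM; ring.
  apply: ler_sum => i _; apply: ler_sum => j _; rewrite Om_entry.
  case: eqP => [_|hj]; first by rewrite expr0n /= sqr_ge0.
  have := Ho i j (introN eqP hj); rewrite -real_normK ?num_real // => h.
  have := normr_ge0 (X i j); nra.
have Os2 : ssq (Om X sg) <= 1 / 64.
  apply: le_trans Os _; nra.
have Os1 : ssq (Om X sg) < 1 by lra.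
have [Y [SY HY]] := L_Yh SX Xp Os1.
have K := L_key SX d0 d3 Hs Ho.
have o0 : 0 <= frob (Om X sg) := frob_ge0 _.
have o8 : frob (Om X sg) <= 1 / 8.
  have := frob_sq (Om X sg); nra.
have oL := frob_le_l1 (Om X sg).
have NS := l1_le (negm X).
have dY := dist_le X SY.
have tri : frob (X - Y) <= frob (Om X sg) + frob (Ym X sg - Y).
  rewrite {1}(YOm X sg) [Ym X sg + _]addrC -addrA; exact: frobD.
rewrite -frob_sq in HY.
set o := frob (Om X sg) in o0 o8 oL HY tri K.
set L := l1 (Om X sg) in oL K.
set N := l1 (negm X) in K NS.
set S := Num.sqrt (n * r)%:R in NS *.
set F := frob (negm X) in NS *.
have S0 : 0 <= S := sqrtr_ge0 _.
have F0 : 0 <= F := frob_ge0 _.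
have h3 : o + o ^+ 2 <= 9 / 8 * L by nra.
have h4 : L <= 4 * N / mu by rewrite ler_pdivlMr // mulrC.
have h5 : 9 / 8 * L <= 9 / 8 * (4 * (S * F) / mu).
  rewrite ler_pM2l; last by lra.
  apply: le_trans h4 _; rewrite ler_pM2r ?invr_gt0 //; lra.
have -> : 9 / 2 * S / mu * F = 9 / 8 * (4 * (S * F) / mu) by field; rewrite gt_eqF.
lra.
Qed.

End EB.


Section Concl.
Variables (R : realType) (n r : nat).
Notation M := 'M[R]_(n, r).
Implicit Types (A B X Y Z : M).

Lemma mne_props (Xs : M) : Splus Xs -> (exists i j, Xs i j != 0) ->
  0 < min_nonzero_entry Xs /\ forall i j, Xs i j != 0 -> min_nonzero_entry Xs <= Xs i j.
Proof.
move=> [NX _] [i0 [j0 h0]].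
pose F (p : 'I_n * 'I_r) := if Xs p.1 p.2 == 0 then 1 else Xs p.1 p.2.
pose m0 := \big[Num.min/1]_p F p.
have Fp : forall p, 0 < F p.
  by move=> p; rewrite /F; case: eqP => // /eqP h; rewrite lt0r h NX.
have m0p : 0 < m0.
  by rewrite /m0; elim/big_ind: _ => // x y hx hy; rewrite lt_min hx hy.
have m0le : forall i j, Xs i j != 0 -> m0 <= Xs i j.
  move=> i j h; rewrite /m0 (bigD1 (i, j)) //= ge_min /F /= (negbTE h) lexx //.
split.
  apply: lt_le_trans m0p _; apply: lb_le_inf.
    by exists (Xs i0 j0), i0, j0.
  by move=> _ [i [j [-> h]]]; exact: m0le.
move=> i j h; apply: (ge_inf (E := [set x | exists i j, x = Xs i j /\ x != 0])).
  by exists 0 => _ [i1 [j1 [-> _]]]; exact: NX.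
by exists i, j.
Qed.


Lemma kappa_ge (mu : R) : 0 < mu -> (r < n)%N -> (1 < r)%N ->
  9 / 2 * Num.sqrt (n * r)%:R / mu <=
  21 / 10 * Num.sqrt r%:R * (1 + 3 * (r * (n - r))%N%:R) / mu.
Proof.
move=> mu0 rn r1.
rewrite ler_pM2r ?invr_gt0 // natrM sqrtrM ?ler0n //.
set sn := Num.sqrt n%:R; set sr := Num.sqrt r%:R.
have sr0 : 0 <= sr := sqrtr_ge0 _.
have sn0 : 0 <= sn := sqrtr_ge0 _.
have sn2 : sn ^+ 2 = n%:R by rewrite sqr_sqrtr // ler0n.
have n3 : (3 <= n)%N by lia.
have n3R : 3 <= n%:R :> R by rewrite (ler_nat R 3 n).
have k : (n <= r * (n - r) + 1)%N by nia.
have kR : n%:R <= (r * (n - r))%N%:R + 1 :> R.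
  by rewrite -(natrD R (r * (n - r)) 1) ler_nat.
have snn : sn <= n%:R by nra.
set K := (r * (n - r))%N%:R in kR *.
have h : 9 / 2 * sn <= 21 / 10 * (1 + 3 * K) by lra.
have := ler_wpM2r sr0 h.
have -> : 21 / 10 * sr * (1 + 3 * K) = 21 / 10 * (1 + 3 * K) * sr by ring.
by have -> : 9 / 2 * (sn * sr) = 9 / 2 * sn * sr by ring.
Qed.

Lemma concl_gen (ismin : M -> Prop) (f : M -> R) (g : R) :
  (1 <= r)%N -> (r <= n)%N -> 0 < g ->
  (forall X, ismin X -> Splus X /\ exists e : R, 0 < e /\
     forall Y, Splus Y -> frob (Y - X) <= e -> f X <= f Y) ->
  ((r < n)%N -> (1 < r)%N -> forall X, ismin X -> forall i, exists j, X i j != 0) ->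
  concl ismin f g.
Proof.
move=> r1 rn g0 Hmin Hrows Xs mXs d' L' gc.
have [SXs [e [e0 He]]] := Hmin Xs mXs.
have L'0 : 0 < L' by case: gc => _ [].
split.
  move=> _ kappa' k0 Hk.
  apply: (core rn g0 SXs e0 He gc ltr01 (ltW k0)) => X SX _.
  apply: le_trans (Hk X SX) _; rewrite ler_pM2l //; exact: dist_Nonneg_le.
move=> [rn' r1'] /=.
have [sg Hsg] := choice (Hrows rn' r1' Xs mXs).
have Hoff : forall i j, j != sg i -> Xs i j = 0.
  move=> i j hj; apply/eqP; apply/negPn/negP => h.
  by move: hj; rewrite (sep SXs h (Hsg i)) eqxx.
have n0 : (0 < n)%N by lia.
have [mu0 Hmu] := mne_props SXs (ex_intro _ (Ordinal n0) (ex_intro _ (sg (Ordinal n0)) (Hsg _))).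
set mu := min_nonzero_entry Xs in mu0 Hmu *.
have [d0 [d00 HEB]] := EB SXs Hoff mu0 (fun i => Hmu _ _ (Hsg i)).
have Kge := kappa_ge mu0 rn' r1'.
set kappa := 21 / 10 * Num.sqrt r%:R * (1 + 3 * (r * (n - r))%N%:R) / mu in Kge *.
have K0 : 0 <= kappa.
  apply: le_trans Kge; apply: divr_ge0; last exact: ltW.
  apply: mulr_ge0; [lra | exact: sqrtr_ge0].
have [d [dp Hd]] : exists d : R, 0 < d /\ forall X, Stiefel X -> frob (X - Xs) <= d ->
    f X - f Xs + 2 * g * kappa ^+ 2 * L' * moreau g X >= 0.
  apply: (core rn g0 SXs e0 He gc d00 K0) => X SX hX.
  apply: le_trans (HEB X SX hX) _; apply: ler_wpM2r => //; exact: frob_ge0.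
exists d; split => // eps _ X SX _ hX; exact: Hd.
Qed.

End Concl.


Section Pen.
Variables (R : realType) (n r : nat).
Notation M := 'M[R]_(n, r).
Implicit Types (A B X Y Z : M).

Lemma X_posm X : X - posm X = - negm X.
Proof.
apply/matrixP => i j; rewrite !mxE.
have [x0|x0] := leP 0 (X i j).
  rewrite (_ : Num.max 0 (- X i j) = 0); last by apply/max_idPl; rewrite oppr_le0.
  by rewrite subrr oppr0.
rewrite (_ : Num.max 0 (- X i j) = - X i j); last by apply/max_idPr; rewrite oppr_ge0 ltW.
by rewrite subr0 opprK.
Qed.

Lemma ssq_split X : ssq X = ssq (posm X) + ssq (negm X).
Proof.
rewrite /ssq -big_split /=; apply: eq_bigr => i _; rewrite -big_split /=.
apply: eq_bigr => j _; rewrite !mxE.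
have [x0|x0] := leP 0 (X i j).
  rewrite (_ : Num.max 0 (- X i j) = 0); last by apply/max_idPl; rewrite oppr_le0.
  by rewrite expr0n addr0.
rewrite (_ : Num.max 0 (- X i j) = - X i j); last by apply/max_idPr; rewrite oppr_ge0 ltW.
by rewrite expr0n add0r sqrrN.
Qed.

Lemma frobZ (c : R) X : frob (c *: X) = `|c| * frob X.
Proof. by rewrite !frobE ssqZ sqrtrM ?sqr_ge0 // sqrtr_sqr. Qed.

Lemma negm_le (Xs : M) X : Nonneg Xs -> frob (negm X) <= frob (X - Xs).
Proof.
move=> NX; rewrite !frobE ler_sqrt ?ssq_ge0 //.
apply: ler_sum => i _; apply: ler_sum => j _; rewrite !mxE.
have := NX i j; have [x0|x0] := leP 0 (X i j).
  rewrite (_ : Num.max 0 (- X i j) = 0); last by apply/max_idPl; rewrite oppr_le0.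
  by rewrite expr0n /= sqr_ge0.
rewrite (_ : Num.max 0 (- X i j) = - X i j); last by apply/max_idPr; rewrite oppr_ge0 ltW.
move=> h; nra.
Qed.

Lemma ssq_St X : Stiefel X -> ssq X = r%:R.
Proof.
move=> SX; rewrite /ssq exchange_big /=.
rewrite (eq_bigr (fun _ => 1)) ?sumr_const ?card_ord //.
move=> j _; have := congr1 (fun A : 'M[R]_r => A j j) SX; rewrite /= StTE mxE eqxx => h.
by rewrite (_ : (1:R) = true%:R) // -h; apply: eq_bigr => i _; rewrite expr2.
Qed.

Lemma EB1 (Xs : M) : (r = 1)%N -> Splus Xs ->
  forall X, Stiefel X -> frob (X - Xs) <= 1 / 2 -> dist X (@Splus R n r) <= 2 * frob (negm X).
Proof.
move=> r1 [NXs _] X SX hX.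
have Fl := negm_le X NXs.
set F := frob (negm X) in Fl *.
have F0 : 0 <= F := frob_ge0 _.
have e1 : ssq (posm X) + F ^+ 2 = 1.
  by rewrite /F frob_sq -ssq_split ssq_St // r1.
set p := frob (posm X).
have p0 : 0 <= p := frob_ge0 _.
have p2 : p ^+ 2 = ssq (posm X) by rewrite frob_sq.
have Fh : F <= 1 / 2 by apply: le_trans Fl hX.
have pp : 0 < p.
  rewrite lt0r p0 andbT; apply/eqP => h; move: p2; rewrite h expr0n /= => h2.
  suff : (1:R) < 0 by rewrite ltr10.
  nra.
have jk : forall j k : 'I_r, j = k by move=> j k; apply: ord_inj; have := ltn_ord j; have := ltn_ord k; lia.
pose Y : M := p^-1 *: posm X.
have SY : Splus Y.
  split; first by move=> i j; rewrite !mxE mulr_ge0 ?invr_ge0 // le_max lexx.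
  apply/matrixP => j k; rewrite StTE mxE -(jk j k) eqxx.
  have h : \sum_i Y i j ^+ 2 = 1.
    have hY : ssq Y = 1.
      by rewrite /Y ssqZ -p2 exprVn mulVf // expf_neq0 // gt_eqF.
    rewrite -hY /ssq [RHS]exchange_big /= [RHS](bigD1 j) //= [X in _ + X]big1 ?addr0 //.
    by move=> k0 hk; move: hk; rewrite (jk k0 j) eqxx.
  by rewrite (_ : true%:R = (1:R)) // -h; apply: eq_bigr => i _; rewrite expr2.
apply: le_trans (dist_le X SY) _.
apply: le_trans (frob_tri X (posm X) Y) _.
rewrite X_posm frobN /Y.
have -> : posm X - p^-1 *: posm X = (1 - p^-1) *: posm X by rewrite scalerBl scale1r.
rewrite frobZ -/p.
have -> : `|1 - p^-1| * p = `|p - 1|.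
  have e : (1 - p^-1) * p = p - 1 by field; rewrite gt_eqF.
  by rewrite -e normrM (ger0_norm p0).
have : `|p - 1| <= F.
  rewrite ler_norml; apply/andP; split; nra.
rewrite -/F; lra.
Qed.


Lemma LEB (Xs : M) : (1 <= r)%N -> (r <= n)%N -> Splus Xs ->
  ((r = 1)%N \/ (forall i, exists j, Xs i j != 0)) ->
  exists d0 : R, 0 < d0 /\ exists K : R, 0 <= K /\
    forall X, Stiefel X -> frob (X - Xs) <= d0 -> dist X (@Splus R n r) <= K * frob (negm X).
Proof.
move=> r1 rn SXs [r1'|rows].
  exists (1 / 2); split => //; exists 2; split => //.
  move=> X SX hX; exact: EB1 r1' SXs X SX hX.
have [sg Hsg] := choice rows.
have Hoff : forall i j, j != sg i -> Xs i j = 0.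
  move=> i j hj; apply/eqP; apply/negPn/negP => h.
  by move: hj; rewrite (sep SXs h (Hsg i)) eqxx.
have n0 : (0 < n)%N by lia.
have [mu0 Hmu] := mne_props SXs (ex_intro _ (Ordinal n0) (ex_intro _ (sg (Ordinal n0)) (Hsg _))).
have [d0 [d00 HEB]] := EB SXs Hoff mu0 (fun i => Hmu _ _ (Hsg i)).
exists d0; split => //; eexists; split; last exact: HEB.
apply: divr_ge0; last exact: ltW.
apply: mulr_ge0; [lra | exact: sqrtr_ge0].
Qed.

End Pen.


Section Pen2.
Variables (R : realType) (n r : nat).
Notation M := 'M[R]_(n, r).
Implicit Types (A B X Y Z : M).

Definition Good (f : M -> R) (g fs rho : R) (Y : M) : Prop :=
  fs <= f Y + rho * moreau g Y /\ (f Y + rho * moreau g Y <= fs -> global_min f Y).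

Lemma local_good (f : M -> R) (g : R) (Xs0 : M) :
  (1 <= r)%N -> (r <= n)%N -> 0 < g ->
  (forall X, Stiefel X -> {for X, continuous f}) ->
  (forall X, global_min f X -> exists d' L', growth_cond f X d' L') ->
  (forall X, global_min f X -> (r = 1)%N \/ forall i, exists j, X i j != 0) ->
  global_min f Xs0 ->
  forall X, Stiefel X -> exists rX : R, \forall Y \near X,
    forall rho, rX <= rho -> Stiefel Y -> Good f g (f Xs0) rho Y.
Proof.
move=> r1 rn g0 cf Hgr Hrows gXs0 X SX.
set fs := f Xs0.
set K1 := Num.max g 1.
have K1g : g <= K1 by rewrite le_max lexx.
have K11 : 1 <= K1 by rewrite le_max lexx orbT.
have K1p : 0 < K1 := lt_le_trans ltr01 K11.
have elb : forall Y, Stiefel Y -> (2 * K1)^-1 * ssq (negm Y) <= moreau g Y.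
  move=> Y SY; apply: moreau_lb => // i j.
  have := St_entry i j SY; rewrite ler_norml => /andP [h _].
  by apply: le_trans h; rewrite lerN2.
have e0 : forall Y, 0 <= moreau g Y by move=> Y; exact: moreau_ge0.
have gmin_eq : forall Y, global_min f Y -> f Y = fs.
  move=> Y [SY HY]; case: gXs0 => SXs0 HXs0.
  by apply/le_anti; rewrite HY // HXs0.
have zero_e : forall Y, Stiefel Y -> moreau g Y <= 0 -> Splus Y.
  move=> Y SY h; split => //; apply/Nonneg_iff.
  have := elb Y SY; have := ssq_ge0 (negm Y).
  have : 0 < (2 * K1)^-1 by rewrite invr_gt0 mulr_gt0.
  move=> hp h1 h2.
  rewrite -(ler_pM2l hp) mulr0; lra.
case: (gXs0) => SXs0 HXs0.
have [gX|ngX] := pselect (global_min f X).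
  have [d' [L' gc]] := Hgr X gX.
  have L'0 : 0 < L' by case: gc => _ [].
  case: (gX) => SX' HX'.
  have [d0 [d00 [K [K0 HK]]]] := LEB r1 rn SX' (Hrows X gX).
  have [d [dp Hd]] := core rn g0 SX' ltr01 (fun Y SY _ => HX' Y SY) gc d00 K0 HK.
  set c := 2 * g * K ^+ 2 * L' in Hd.
  have c0 : 0 <= c.
    rewrite /c; apply: mulr_ge0; last exact: ltW.
    apply: mulr_ge0; last exact: sqr_ge0.
    apply: mulr_ge0 => //; exact: ltW.
  exists (c + 1).
  have dp' : frob (X - X) < d by rewrite subrr frob0.
  have nb : \forall Y \near X, frob (X - Y) < d.
    exact: (cvgr_lt _ (cont_frobB (A:=X) (X:=X)) _ dp').
  near=> Y => rho hrho SY.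
  have hY : frob (Y - X) <= d by rewrite frobB ltW //; near: Y.
  have hc := Hd Y SY hY.
  rewrite (gmin_eq X gX) in hc.
  have hm : c * moreau g Y <= rho * moreau g Y by rewrite ler_wpM2r // ?e0 //; lra.
  split; first lra.
  move=> hle.
  have hm0 : moreau g Y <= 0.
    have := e0 Y; have : 1 <= rho - c by lra.
    nra.
  split; first exact: zero_e.
  move=> Z SZ; apply: le_trans (HXs0 Z SZ).
  rewrite -/fs; have := e0 Y; have : 0 <= rho by lra.
  nra.
have [SpX|nSpX] := pselect (Splus X).
  have fX : fs < f X.
    rewrite ltNge; apply/negP => h; apply: ngX; split => // Z SZ.
    exact: le_trans h (HXs0 Z SZ).
  exists 0.
  have nb : \forall Y \near X, fs < f Y by exact: (cvgr_gt _ (cf X SX) _ fX).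
  near=> Y => rho hrho SY.
  have hY : fs < f Y by near: Y.
  have hm : 0 <= rho * moreau g Y by rewrite mulr_ge0 ?e0.
  split; first lra.
  move=> h; have hh : fs < fs by lra.
by rewrite ltxx in hh.
have hpos : 0 < ssq (negm X).
  rewrite lt_neqAle ssq_ge0 andbT; apply/eqP => h; apply: nSpX; split => //.
  by apply/Nonneg_iff; rewrite -h.
set h0 := ssq (negm X) in hpos.
exists (Num.max 0 (4 * K1 * (fs - f X + 2) / h0)).
have fX1 : f X - 1 < f X by lra.
have nb1 : \forall Y \near X, f X - 1 < f Y by exact: (cvgr_gt _ (cf X SX) _ fX1).
have h02 : h0 / 2 < h0 by lra.
have nb2 : \forall Y \near X, h0 / 2 < ssq (negm Y) by exact: (cvgr_gt _ (cont_negm (X:=X)) _ h02).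
near=> Y => rho; rewrite ge_max => /andP [rho0 hrho] SY.
have hf : f X - 1 < f Y by near: Y.
have hn : h0 / 2 < ssq (negm Y) by near: Y.
have A0 : 4 * K1 * (fs - f X + 2) <= rho * h0 by rewrite -ler_pdivrMr.
have A1 : fs - f X + 2 <= rho * ((2 * K1)^-1 * (h0 / 2)).
  have -> : rho * ((2 * K1)^-1 * (h0 / 2)) = (rho * h0) / (4 * K1) by field; rewrite gt_eqF.
  rewrite ler_pdivlMr ?mulr_gt0 //; lra.
have A2 : rho * ((2 * K1)^-1 * (h0 / 2)) <= rho * moreau g Y.
  rewrite ler_wpM2l //; apply: le_trans (elb Y SY).
  rewrite ler_wpM2l ?invr_ge0 ?mulr_ge0 //; [exact: ltW | exact: ltW].
split; first lra.
move=> h; have hh : fs < fs by lra.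
by rewrite ltxx in hh.
Unshelve. all: by end_near.
Qed.


Lemma penalty (f : M -> R) (g : R) :
  (1 <= r)%N -> (r <= n)%N -> 0 < g ->
  (forall X, Stiefel X -> {for X, continuous f}) ->
  (forall X, global_min f X -> exists d' L', growth_cond f X d' L') ->
  (forall X, global_min f X -> (r = 1)%N \/ forall i, exists j, X i j != 0) ->
  exists rho_hat : R, 0 < rho_hat /\ forall rho : R, rho_hat <= rho ->
    forall X, penalty_global_min f g rho X <-> global_min f X.
Proof.
move=> r1 rn g0 cf Hgr Hrows.
have [Xs0 gXs0] := min_exists rn (fun X (SX : Splus X) => cf X (proj2 SX)).
pose P (rho : R) (Y : M) := Stiefel Y -> Good f g (f Xs0) rho Y.
have HX : forall X, Stiefel X -> \forall x' \near X & i \near (pinfty_nbhs R), P i x'.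
  move=> X SX.
  have [rX H] := local_good r1 rn g0 cf Hgr Hrows gXs0 SX.
  exists ([set Y | forall rho, rX <= rho -> Stiefel Y -> Good f g (f Xs0) rho Y],
          [set rho | rX < rho]).
    split => //=; exists rX; split => //; exact: num_real.
  by move=> [Y rho] [/= UY Vrho] SY; apply: UY => //; exact: ltW.
have cov := (compact_near_coveringP _).1 (@compact_St R n r) R (pinfty_nbhs R) P _ HX.
case: cov => M0 [M0r HM].
exists (Num.max (M0 + 1) 1); split; first by rewrite lt_max ltr01 orbT.
move=> rho; rewrite ge_max => /andP [hr1 hr2].
have Mr : M0 < rho by lra.
have G := HM rho Mr.
case: (gXs0) => SXs0 HXs0.
have e0X : moreau g Xs0 = 0 by apply: moreau_nonneg => //; exact: SXs0.1.
move=> X; split.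
  move=> [SX HX'].
  have h := HX' Xs0 SXs0.2; rewrite e0X mulr0 addr0 in h.
  exact: (G X SX SX).2 h.
move=> gX; have [SX HX'] := gX.
have fX : f X = f Xs0 by apply/le_anti; rewrite HX' // HXs0.
have e0 : moreau g X = 0 by apply: moreau_nonneg => //; exact: SX.1.
split; first exact: SX.2.
move=> Y SY; rewrite e0 mulr0 addr0 fX; exact: (G Y SY SY).1.
Qed.

End Pen2.

Lemma sq_rows (R : realType) (m : nat) (X : 'M[R]_m) :
  X^T *m X = 1%:M -> forall i, exists j, X i j != 0.
Proof.
move=> H i; have H2 := mulmx1C H.
have e := congr1 (fun A : 'M[R]_m => A i i) H2; move: e; rewrite /= !mxE eqxx => e.
apply: contrapT => Hn.
have Hz : forall j, X i j = 0.
  by move=> j; apply/eqP; apply/negPn/negP => hj; apply: Hn; exists j.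
move: e; rewrite big1 => [h|j _]; last by rewrite Hz mul0r.
by have := @oner_neq0 R; rewrite -[X in X != 0]/(true%:R) -h eqxx.
Qed.

Lemma sq_rows_nr (R : realType) (n r : nat) (e : n = r) (X : 'M[R]_(n, r)) :
  Stiefel X -> forall i, exists j, X i j != 0.
Proof. by subst r; exact: sq_rows. Qed.

Theorem theorem3p10 (R : realType) (n r : nat) (O : set 'M[R]_(n, r))
    (f : 'M[R]_(n, r) -> R) (gamma : R) :
  (1 <= r)%N -> (r <= n)%N ->
  open O -> @Stiefel R n r `<=` O -> C1_on O f -> 0 < gamma ->
  (hyps (global_min f) f ->
     concl (global_min f) f gamma /\
     exists rho_hat : R, 0 < rho_hat /\ forall rho : R, rho_hat <= rho ->
       forall X, penalty_global_min f gamma rho X <-> global_min f X)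
  /\
  (hyps (local_min f) f -> concl (local_min f) f gamma).
Proof.
move=> r1 rn oO StO [Hdiff _] g0.
have cf : forall X, Stiefel X -> {for X, continuous f}.
  by move=> X SX; apply: differentiable_continuous; apply: Hdiff; exact: StO.
split.
  move=> [H1 H2]; split.
    apply: concl_gen => // X [SX HX]; split => //.
    by exists 1; split => // Y SY _; exact: HX.
  apply: penalty => // X gX.
  have [r1'|r1'] := eqVneq r 1%N; first by left.
  right; have r2 : (1 < r)%N by lia.
  have [rn'|rn'] := ltnP r n; first exact: H1.
  have e : n = r by lia.
  by case: gX => [[_ SX] _]; exact: sq_rows_nr e X SX.
move=> [H1 H2]; exact: concl_gen.
Qed.
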